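(* Let $A$ be a Noetherian commutative ring with identity, let $A[\mathbf{x}]=A[x_1,\ldots,x_n]$ be equipped with a monomial order, let $I\subset A[\mathbf{x}]$ be an ideal, let $p\subset A$ be a prime, and let $B=A_p/(I\cap A)_p$. If for each monomial $\mathbf{x}^E$ the ideal $\mathrm{in}(I)_E\,B$ is either $(0)$ or $(1)$, then $$\mathrm{in}(I)\,k(p)[\mathbf{x}]=\mathrm{in}(I\,k(p)[\mathbf{x}]).$$
   Context: A monomial order $>$ is a total order on monomials such that $\mathbf{x}^E>\mathbf{x}^F$ implies $\mathbf{x}^G\mathbf{x}^E>\mathbf{x}^G\mathbf{x}^F$, and $x_i>1$ for each $i$. $\mathrm{in}(f)$ is the greatest term $c\,\mathbf{x}^E$ ($c\neq0$) of a nonzero polynomial $f$; $\mathrm{in}(I)$ is the ideal generated by all $\mathrm{in}(f)$, $f\in I$. For an ideal $J\subset A[\mathbf{x}]$ and exponent $E$, the coefficient ideal is $J_E=(c\in A\mid c\,\mathbf{x}^E\in J)$; $J_E B$ is the ideal of $B$ generated by its image. $k(p)=A_p/pA_p$ is the residue field of $p$, and $K\,k(p)[\mathbf{x}]$ denotes the ideal generated by the image of $K\subset A[\mathbf{x}]$ under the coefficientwise map $A\to k(p)$. *)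

(* Defs.v *)
From HB Require Import structures.
From mathcomp Require Import all_boot all_order all_algebra.
From mathcomp Require Export mpoly.
Set Implicit Arguments. Unset Strict Implicit. Unset Printing Implicit Defensive.
Import Order.TTheory GRing.Theory.
Local Open Scope ring_scope.

Definition is_ideal (R : comPzRingType) (J : R -> Prop) : Prop :=
  [/\ J 0, (forall x y, J x -> J y -> J (x + y)) & (forall r x, J x -> J (r * x))].

Definition ideal_gen (R : comPzRingType) (S : R -> Prop) : R -> Prop :=
  fun x => exists (k : nat) (r s : 'I_k -> R),
      (forall i, S (s i)) /\ x = \sum_(i < k) r i * s i.

Definition is_prime_ideal (R : comPzRingType) (P : R -> Prop) : Prop :=
  [/\ is_ideal P, ~ P 1 & forall a b, P (a * b) -> P a \/ P b].

Definition noetherian (R : comPzRingType) : Prop :=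
  forall J : R -> Prop, is_ideal J ->
    exists s : seq R, forall x, J x <-> ideal_gen (fun y => y \in s) x.

Definition monomial_order (n : nat) (lt : rel 'X_{1..n}) : Prop :=
  [/\ (forall m, ~~ lt m m),
      (forall m1 m2 m3, lt m1 m2 -> lt m2 m3 -> lt m1 m3),
      (forall m1 m2, m1 != m2 -> lt m1 m2 || lt m2 m1),
      (forall g e f, lt f e -> lt (g + f)%MM (g + e)%MM) &
      (forall i : 'I_n, lt 0%MM U_(i)%MM)].

Definition greatest_mono (n : nat) (R : nzRingType) (lt : rel 'X_{1..n})
    (f : {mpoly R[n]}) (m : 'X_{1..n}) : bool :=
  (m \in msupp f) && all (fun m' => (m' == m) || lt m' m) (msupp f).

(* in(f): the greatest term c x^E of f (and 0 for f = 0). *)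
Definition init_term (n : nat) (R : nzRingType) (lt : rel 'X_{1..n})
    (f : {mpoly R[n]}) : {mpoly R[n]} :=
  \sum_(m <- msupp f | greatest_mono lt f m) f@_m *: 'X_[m].

Definition init_ideal (n : nat) (R : comNzRingType) (lt : rel 'X_{1..n})
    (I : {mpoly R[n]} -> Prop) : {mpoly R[n]} -> Prop :=
  ideal_gen (fun g => exists f, I f /\ f != 0 /\ g = init_term lt f).

Definition coef_ideal (n : nat) (R : comNzRingType)
    (J : {mpoly R[n]} -> Prop) (E : 'X_{1..n}) : R -> Prop :=
  ideal_gen (fun c => J (c *: 'X_[E])).

Definition ext_ideal (R S : comPzRingType) (f : R -> S) (J : R -> Prop) : S -> Prop :=
  ideal_gen (fun y => exists x, J x /\ y = f x).

Definition ext_mpoly_ideal (n : nat) (R S : comNzRingType) (phi : {rmorphism R -> S})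
    (J : {mpoly R[n]} -> Prop) : {mpoly S[n]} -> Prop :=
  ext_ideal (map_mpoly phi) J.

(* (B, psi) is (isomorphic to) A_p / (I ∩ A)_p with psi the canonical map:
   elements outside p become units, the kernel is exactly
   {a | a/1 ∈ (I∩A)_p} = {a | exists s ∉ p, s a ∈ I ∩ A},
   and every element of B is of the form psi(a) psi(s)^-1 with s ∉ p. *)
Definition is_loc_quot (n : nat) (A : comNzRingType) (P : A -> Prop)
    (I : {mpoly A[n]} -> Prop) (B : comPzRingType) (psi : {rmorphism A -> B}) : Prop :=
  [/\ (forall s, ~ P s -> exists t, psi s * t = 1),
      (forall a, psi a = 0 <-> exists s, ~ P s /\ I ((s * a)%:MP)) &
      (forall b, exists a s, ~ P s /\ b * psi s = psi a)].

(* (K, phi) is (isomorphic to) the residue field k(p) = A_p / pA_p with phi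
   the canonical map: kernel exactly p, and K = {phi(a)/phi(s) | s ∉ p}. *)
Definition is_residue_field (A : comNzRingType) (P : A -> Prop)
    (K : fieldType) (phi : {rmorphism A -> K}) : Prop :=
  (forall a, phi a = 0 <-> P a) /\
  (forall k, exists a s, ~ P s /\ k * phi s = phi a).

(* Main.v *)
Require Import Defs.
From HB Require Import structures.
From mathcomp Require Import all_boot all_order all_algebra.
From mathcomp Require Import mpoly.
From Stdlib Require Import Classical ClassicalEpsilon.
From mathcomp Require Import ring.
Set Implicit Arguments. Unset Strict Implicit. Unset Printing Implicit Defensive.
Import Order.TTheory GRing.Theory.
Local Open Scope ring_scope.

Section Ideals.
Variable R : comPzRingType.

Lemma idealN (J : R -> Prop) x : is_ideal J -> J x -> J (- x).
Proof. by case=> _ _ hM Jx; rewrite -mulN1r; apply: hM. Qed.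

Lemma idealB (J : R -> Prop) x y : is_ideal J -> J x -> J y -> J (x - y).
Proof. move=> hJ Jx Jy; case: (hJ) => _ hD _; apply: hD => //; exact: idealN. Qed.

Lemma idealMr (J : R -> Prop) x r : is_ideal J -> J x -> J (x * r).
Proof. by case=> _ _ hM Jx; rewrite mulrC; apply: hM. Qed.

Lemma ideal_sum (J : R -> Prop) (I : Type) (s : seq I) (Q : pred I) F :
  is_ideal J -> (forall i, Q i -> J (F i)) -> J (\sum_(i <- s | Q i) F i).
Proof.
case=> h0 hD _ hF; elim: s => [|a s IH]; first by rewrite big_nil.
by rewrite big_cons; case: ifP => // Qa; apply: hD => //; apply: hF.
Qed.

Lemma ig_sub (S : R -> Prop) x : S x -> ideal_gen S x.
Proof.
move=> Sx; exists 1%N, (fun _ => 1), (fun _ => x); split => //.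
by rewrite big_ord1 mul1r.
Qed.

Lemma ig_ideal (S : R -> Prop) : is_ideal (ideal_gen S).
Proof.
split.
- by exists 0%N, (fun _ => 0), (fun _ => 0); split => [[]|]; rewrite ?big_ord0.
- move=> x y [k1 [r1 [s1 [H1 ->]]]] [k2 [r2 [s2 [H2 ->]]]].
  exists (k1 + k2)%N.
  exists (fun i => match split i with inl j => r1 j | inr j => r2 j end).
  exists (fun i => match split i with inl j => s1 j | inr j => s2 j end).
  split; first by move=> i; case: (split i).
  rewrite big_split_ord /=; congr (_ + _); apply: eq_bigr => i _.
    by rewrite -[lshift _ _]/(unsplit (inl i)) unsplitK.
  by rewrite -[rshift _ _]/(unsplit (inr i)) unsplitK.
- move=> r x [k [r1 [s1 [H1 ->]]]]; exists k, (fun i => r * r1 i), s1.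
  by split => //; rewrite mulr_sumr; apply: eq_bigr => i _; rewrite mulrA.
Qed.

Lemma ig_min (S J : R -> Prop) : is_ideal J -> (forall x, S x -> J x) ->
  forall x, ideal_gen S x -> J x.
Proof.
move=> hJ hS x [k [r [s [Hs ->]]]]; apply: ideal_sum => // i _.
by case: hJ => _ _ hM; apply/hM/hS.
Qed.

End Ideals.

Lemma nat_exmin (u : nat -> nat) j :
  exists i, (j < i)%N /\ forall i', (j < i')%N -> (u i <= u i')%N.
Proof.
suff H : forall v, (exists i, (j < i)%N /\ u i = v) ->
  exists i, (j < i)%N /\ forall i', (j < i')%N -> (u i <= u i')%N.
  by apply: (H (u j.+1)); exists j.+1.
elim/ltn_ind => v IH [i [ji uiv]].
case: (classic (forall i', (j < i')%N -> (u i <= u i')%N)) => [H|H].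
  by exists i.
have [i' Hi'] := not_all_ex_not _ _ H.
have [ji' /negP] := imply_to_and _ _ Hi'.
rewrite -ltnNge => lti'; apply: (IH (u i')); first by rewrite -uiv.
by exists i'.
Qed.

Lemma nat_subseq (u : nat -> nat) : exists phi : nat -> nat,
  (forall i, (phi i < phi i.+1)%N) /\ (forall i, (u (phi i) <= u (phi i.+1))%N).
Proof.
have H : forall j, {i | (j < i)%N /\ forall i', (j < i')%N -> (u i <= u i')%N}.
  by move=> j; apply: constructive_indefinite_description; apply: nat_exmin.
pose nx j := sval (H j).
have nxP j : (j < nx j)%N /\ forall i', (j < i')%N -> (u (nx j) <= u i')%N.
  exact: svalP (H j).
pose phi k := iter k.+1 nx 0%N.
have phiS k : phi k.+1 = nx (phi k) by [].
have phiI k : (phi k < phi k.+1)%N by rewrite phiS; case: (nxP (phi k)).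
have phiP k : exists p, (p < phi k)%N /\ phi k = nx p.
  by exists (iter k nx 0%N); split => //; case: (nxP (iter k nx 0%N)).
exists phi; split => // k.
case: (phiP k) => p [pk e]; rewrite phiS e.
case: (nxP p) => h1 h2; apply: h2.
by apply: (ltn_trans h1); case: (nxP (nx p)).
Qed.

Lemma dickson n (u : nat -> 'X_{1..n}) : exists i j, (i < j)%N /\ (u i <= u j)%MM.
Proof.
suff H : forall k, (k <= n)%N -> exists phi : nat -> nat,
  (forall i, (phi i < phi i.+1)%N) /\
  (forall (l : 'I_n) i, (l < k)%N -> (u (phi i) l <= u (phi i.+1) l)%N).
  have [phi [H1 H2]] := H n (leqnn n).
  exists (phi 0%N), (phi 1%N); split => //.
  by apply/mnm_lepP => l; apply: H2.
elim => [_|k IH kn].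
  by exists id; split.
have [phi [H1 H2]] := IH (ltnW kn).
pose l0 : 'I_n := Ordinal kn.
have [psi [P1 P2]] := nat_subseq (fun i => u (phi i) l0).
have phimono : {homo phi : i j / (i < j)%N >-> (i < j)%N}.
  by apply: homo_ltn => //; apply: ltn_trans.
have psimono : {homo psi : i j / (i < j)%N >-> (i < j)%N}.
  by apply: homo_ltn => //; apply: ltn_trans.
exists (fun i => phi (psi i)); split.
  by move=> i; apply/phimono/P1.
move=> l i; rewrite ltnS leq_eqVlt => /orP [/eqP lk|lk].
  have -> : l = l0 by apply: val_inj.
  exact: P2.
have hm : {homo (fun i => u (phi i) l) : i j / (i <= j)%N >-> (i <= j)%N}.
  apply: homo_leq => //; first exact: leq_trans.
  by move=> i'; apply: H2.
by apply: hm; apply: ltnW; apply: P1.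
Qed.

Section MonoOrder.
Variables (n : nat) (lt : rel 'X_{1..n}).
Hypothesis Hlt : monomial_order lt.

Lemma mo_irr m : ~~ lt m m. Proof. by case: Hlt. Qed.
Lemma mo_trans m1 m2 m3 : lt m1 m2 -> lt m2 m3 -> lt m1 m3.
Proof. by case: Hlt => _ h _ _ _; apply: h. Qed.
Lemma mo_total m1 m2 : m1 != m2 -> lt m1 m2 || lt m2 m1.
Proof. by case: Hlt => _ _ h _ _; apply: h. Qed.
Lemma mo_add g f e : lt f e -> lt (g + f)%MM (g + e)%MM.
Proof. by case: Hlt => _ _ _ h _; apply: h. Qed.
Lemma mo_addr g f e : lt f e -> lt (f + g)%MM (e + g)%MM.
Proof. by rewrite ![(_ + g)%MM]addmC; apply: mo_add. Qed.
Lemma mo_0U i : lt 0%MM U_(i)%MM. Proof. by case: Hlt. Qed.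

Lemma mo_asym m1 m2 : lt m1 m2 -> ~~ lt m2 m1.
Proof. by move=> h; apply/negP => h'; move: (mo_irr m1); rewrite (mo_trans h h'). Qed.

Lemma mo_lt0 d : d != 0%MM -> lt 0%MM d.
Proof.
move: {2}(mdeg d) (leqnn (mdeg d)) => k; elim: k d => [|k IH] d.
  by rewrite leqn0 mdeg_eq0 => ->.
move=> hk dn0.
have [i di] : exists i, d i != 0%N.
  apply/existsP; apply: contraR dn0; rewrite negb_exists => /forallP h.
  by apply/eqP/mnmP => i; rewrite mnm0E; apply/eqP; move: (h i); rewrite negbK.
have Ud : (U_(i) <= d)%MM by rewrite lep1mP.
have ed := submK Ud.
have [d0|d0] := eqVneq (d - U_(i))%MM 0%MM.
  by rewrite -ed d0 add0m mo_0U.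
have : lt 0%MM (d - U_(i))%MM.
  apply: (IH _ _ d0).
  have e2 : mdeg d = (mdeg (d - U_(i))%MM).+1 by rewrite -{1}ed mdegD mdeg1 addn1.
  by move: hk; rewrite e2 ltnS.
move=> h0; have h := mo_addr U_(i) h0; rewrite -ed; apply: mo_trans h.
by rewrite add0m mo_0U.
Qed.

Lemma mo_not_lt_add m d : ~~ lt (m + d)%MM m.
Proof.
have [->|d0] := eqVneq d 0%MM; first by rewrite addm0 mo_irr.
apply: mo_asym; rewrite -{1}(addm0 m); exact/mo_add/mo_lt0.
Qed.

Lemma mo_wf : well_founded (fun a b => lt a b).
Proof.
move=> m0; apply: NNPP => nA.
have step : forall x : {x | ~ Acc (fun a b => lt a b) x},
    {y : {x | ~ Acc (fun a b => lt a b) x} | lt (sval y) (sval x)}.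
  move=> [x hx]; apply: constructive_indefinite_description.
  apply: NNPP => hn; apply: (hx); constructor => y hy.
  apply: NNPP => hy'; apply: hn.
  by exists (exist _ y hy').
pose f x := sval (step x).
pose u k := sval (iter k f (exist _ m0 nA)).
have uS k : lt (u k.+1) (u k) by rewrite /u /= /f; exact: svalP (step _).
have ud : {homo u : i j / (i < j)%N >-> lt j i}.
  apply: (@homo_ltn _ u (fun a b => lt b a)) => // y x z h1 h2.
  exact: mo_trans h2 h1.
have [i [j [ij lij]]] := dickson u.
have := ud _ _ ij; rewrite -(submK lij) addmC.
by rewrite (negbTE (mo_not_lt_add _ _)).
Qed.

End MonoOrder.

Section Greatest.
Variables (n : nat) (lt : rel 'X_{1..n}).
Hypothesis Hlt : monomial_order lt.
Variable R : comNzRingType.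

Lemma seq_greatest (s : seq 'X_{1..n}) : s != [::] ->
  exists M, M \in s /\ all (fun m' => (m' == M) || lt m' M) s.
Proof.
elim: s => [//|x s IH] _.
have [->|sn] := eqVneq s [::].
  by exists x; rewrite /= mem_seq1 eqxx.
have [M [Ms HM]] := IH sn.
have [xM|xM] := eqVneq x M.
  by exists M; rewrite /= inE Ms orbT xM eqxx.
case/orP: (mo_total Hlt xM) => h.
  by exists M; rewrite /= inE Ms orbT h orbT HM.
exists x; split; first by rewrite inE eqxx.
rewrite /= eqxx /=; apply/allP => m ms.
move/allP: HM => /(_ m ms) /orP [/eqP ->|h']; first by rewrite h orbT.
by rewrite (mo_trans Hlt h' h) orbT.
Qed.

Lemma greatestP (f : {mpoly R[n]}) M :
  greatest_mono lt f M <-> (f@_M != 0 /\ forall m, lt M m -> f@_m = 0).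
Proof.
split.
  case/andP => HM /allP Hall; split; first by rewrite -mcoeff_msupp.
  move=> m lm; apply/eqP; rewrite mcoeff_eq0; apply/negP => ms.
  case/orP: (Hall m ms) => [/eqP e|h].
    by move: (mo_irr Hlt M); rewrite -{2}e lm.
  by move: (mo_asym Hlt h); rewrite lm.
move=> [h0 h1]; apply/andP; split; first by rewrite mcoeff_msupp.
apply/allP => m ms; have [//|ne] := eqVneq m M.
case/orP: (mo_total Hlt ne) => // h.
by move: ms; rewrite mcoeff_msupp h1 ?eqxx.
Qed.

Lemma exists_greatest (f : {mpoly R[n]}) : f != 0 -> exists M, greatest_mono lt f M.
Proof.
move=> fn0; have [|M [Ms HM]] := @seq_greatest (msupp f).
  by rewrite msupp_eq0.
by exists M; rewrite /greatest_mono Ms HM.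
Qed.

Lemma init_termE (f : {mpoly R[n]}) M :
  greatest_mono lt f M -> init_term lt f = f@_M *: 'X_[M].
Proof.
move=> hM; rewrite /init_term -big_filter.
have -> : [seq m <- msupp f | greatest_mono lt f m] = [:: M].
  rewrite -(@filter_pred1_uniq _ (msupp f) M) ?msupp_uniq; last by case/andP: hM.
  apply: eq_in_filter => m ms /=; apply/idP/eqP => [hm|->//].
  have [//|ne] := eqVneq m M.
  case/greatestP: hM => c0 c1; case/greatestP: hm => d0 d1.
  case/orP: (mo_total Hlt ne) => h.
    by move: c0; rewrite d1 ?eqxx.
  by move: d0; rewrite c1 ?eqxx.
  by []. 
by rewrite big_seq1.
Qed.

Lemma greatest_monomial (c : R) M : c != 0 -> greatest_mono lt (c *: 'X_[M]) M.
Proof.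
move=> c0; apply/greatestP; rewrite mcoeffZ mcoeffX eqxx mulr1; split => // m lm.
rewrite mcoeffZ mcoeffX; case: eqP => [e|_]; last by rewrite mulr0.
by move: (mo_irr Hlt M); rewrite {2}e lm.
Qed.

Lemma coefMX (p : {mpoly R[n]}) m k : (p * 'X_[m])@_k != 0 ->
  exists k', k = (m + k')%MM /\ p@_k' != 0.
Proof.
rewrite -mcoeff_msupp (perm_mem (msuppMX p m)) => /mapP [k' hk' ->].
by exists k'; rewrite -mcoeff_msupp.
Qed.

End Greatest.

Section Main.
Variables (A : comNzRingType) (n : nat) (lt : rel 'X_{1..n})
    (I : {mpoly A[n]} -> Prop) (P : A -> Prop)
    (B : comPzRingType) (psi : {rmorphism A -> B})
    (K : fieldType) (phi : {rmorphism A -> K}).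
Hypotheses (Hlt : monomial_order lt) (HI : is_ideal I) (HP : is_prime_ideal P)
  (Hloc : is_loc_quot P I psi) (Hres : is_residue_field P phi).

Local Notation JI := (init_ideal lt I).

Lemma HJI : is_ideal JI. Proof. exact: ig_ideal. Qed.

Lemma I0 : I 0. Proof. by case: HI. Qed.
Lemma ID f g : I f -> I g -> I (f + g). Proof. by case: HI => _ h _; apply: h. Qed.
Lemma IM r f : I f -> I (r * f). Proof. by case: HI => _ _ h; apply: h. Qed.
Lemma IZ c f : I f -> I (c *: f). Proof. by move=> h; rewrite -mul_mpolyC; apply: IM. Qed.

Lemma notP1 : ~ P 1. Proof. by case: HP. Qed.
Lemma notPM a b : ~ P a -> ~ P b -> ~ P (a * b).
Proof. by case: HP => _ _ h na nb /h [] . Qed.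


Lemma phi_eq0 a : phi a = 0 <-> P a. Proof. by case: Hres. Qed.
Lemma phi_neq0 a : ~ P a -> phi a != 0.
Proof. by move=> na; apply/eqP => /phi_eq0. Qed.

Lemma nz_of_coef (R : comNzRingType) (f : {mpoly R[n]}) m : f@_m != 0 -> f != 0.
Proof. by apply: contraNneq => ->; rewrite mcoeff0. Qed.

Lemma mono_in_JI c M : I (c *: 'X_[M]) -> JI (c *: 'X_[M]).
Proof.
move=> h; have [->|c0] := eqVneq c 0.
  by rewrite scale0r; case: HJI.
apply: ig_sub; exists (c *: 'X_[M]); split => //; split.
  by apply: (@nz_of_coef _ _ M); rewrite mcoeffZ mcoeffX eqxx mulr1.
rewrite (init_termE Hlt (greatest_monomial Hlt M c0)).
by rewrite mcoeffZ mcoeffX eqxx mulr1.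
Qed.

Lemma init_in_JI f M : I f -> greatest_mono lt f M -> JI (f@_M *: 'X_[M]).
Proof.
move=> If hM; apply: ig_sub; exists f; split => //; split.
  by case/andP: hM => Ms _; apply/eqP => f0; move: Ms; rewrite f0 msupp0.
by rewrite (init_termE Hlt hM).
Qed.

Definition Good (h : {mpoly A[n]}) := forall E, exists f, I f /\ f@_E = h@_E /\
  forall m, lt E m -> f@_m = 0.

Lemma Good0 : Good 0.
Proof. by move=> E; exists 0; split; [exact: I0|split=> [|m _]; rewrite mcoeff0]. Qed.

Lemma GoodD h1 h2 : Good h1 -> Good h2 -> Good (h1 + h2).
Proof.
move=> g1 g2 E; have [f1 [If1 [e1 z1]]] := g1 E; have [f2 [If2 [e2 z2]]] := g2 E.
exists (f1 + f2); split; first exact: ID.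
by split => [|m lm]; rewrite !mcoeffD ?e1 ?e2 // z1 // z2 // addr0.
Qed.

Lemma GoodZ c h : Good h -> Good (c *: h).
Proof.
move=> g E; have [f [If [e z]]] := g E.
exists (c *: f); split; first exact: IZ.
by split => [|m lm]; rewrite !mcoeffZ ?e // z // mulr0.
Qed.

Lemma GoodX m h : Good h -> Good ('X_[m] * h).
Proof.
move=> g E; rewrite mulrC.
have [[E0 ->]|nE] := classic (exists E0, E = (m + E0)%MM); last first.
  exists 0; split; first exact: I0; split => [|m' _]; rewrite ?mcoeff0 //.
  apply/eqP; rewrite eq_sym; apply: contraT => /coefMX [k [ek _]].
  by case: nE; exists k.
have [f [If [e z]]] := g E0.
exists (f * 'X_[m]); split; first by rewrite mulrC; apply: IM.
split; first by rewrite !mcoeffMX.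
move=> m' lm; apply/eqP; apply: contraT => /coefMX [k [ek nk]].
move: nk; rewrite z ?eqxx //; move: lm; rewrite ek.
have [->|ne] := eqVneq k E0; first by rewrite (negbTE (mo_irr Hlt _)).
case/orP: (mo_total Hlt ne) => // hk /(mo_asym Hlt).
by rewrite (mo_add Hlt m hk).
Qed.

Lemma Good_sum (T : Type) (s : seq T) (F : T -> {mpoly A[n]}) :
  (forall i, Good (F i)) -> Good (\sum_(i <- s) F i).
Proof.
move=> h; elim: s => [|a s IH]; first by rewrite big_nil; exact: Good0.
by rewrite big_cons; apply: GoodD.
Qed.

Lemma Good_ideal : is_ideal Good.
Proof.
split; [exact: Good0 | exact: GoodD |].
move=> r h g; rewrite (mpolyE r) mulr_suml; apply: Good_sum => m.
by rewrite -scalerAl; apply: GoodZ; apply: GoodX.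
Qed.

Lemma JI_Good h : JI h -> Good h.
Proof.
apply: ig_min; first exact: Good_ideal.
move=> x [f [If [fn0 ->]]].
have [M hM] := exists_greatest Hlt fn0.
rewrite (init_termE Hlt hM) => E.
have [<-|ne] := eqVneq M E.
  exists f; split => //; split; first by rewrite mcoeffZ mcoeffX eqxx mulr1.
  by case/greatestP: hM.
exists 0; split; first exact: I0.
by split => [|m _]; rewrite ?mcoeff0 // mcoeffZ mcoeffX (negbTE ne) mulr0.
Qed.


Lemma unit_coef E : ext_ideal psi (coef_ideal JI E) 1 ->
  exists d, ~ P d /\ JI (d *: 'X_[E]).
Proof.
move=> h1.
pose C c := JI (c *: 'X_[E]).
have C0 : C 0 by rewrite /C scale0r; case: HJI.
have CD : forall a b, C a -> C b -> C (a + b).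
  by move=> a b ha hb; rewrite /C scalerDl; case: HJI => _ hD _; apply: hD.
have CM : forall r a, C a -> C (r * a).
  by move=> r a ha; rewrite /C -scalerA -mul_mpolyC; case: HJI => _ _ hM; apply: hM.
have hC : forall c, coef_ideal JI E c -> C c.
  by apply: ig_min => //; split.
pose D b := exists c s, C c /\ ~ P s /\ b * psi s = psi c.
have hD : is_ideal D.
  split.
  - by exists 0, 1; split => //; split; [exact: notP1 | rewrite !rmorph0 mul0r].
  - move=> x y [c1 [s1 [hc1 [hs1 e1]]]] [c2 [s2 [hc2 [hs2 e2]]]].
    exists (c1 * s2 + c2 * s1), (s1 * s2); split.
      by apply: CD; rewrite mulrC; apply: CM.
    split; first exact: notPM.
    rewrite rmorphD !rmorphM -e1 -e2 /=; ring.
  - move=> r x [c [s [hc [hs e]]]].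
    case: Hloc => _ _ /(_ r) [a [u [hu eu]]].
    exists (a * c), (u * s); split; first exact: CM.
    split; first exact: notPM.
    rewrite !rmorphM -e -eu; ring.
have [c [s [hc [hs e]]]] : D 1.
  apply: (ig_min hD _ h1) => y [x [hx ->]].
  by exists x, 1; split; [exact: hC | split; [exact: notP1 | rewrite rmorph1 mulr1]].
rewrite mul1r in e.
have e0 : psi (s - c) = 0 by rewrite rmorphB e subrr.
case: Hloc => _ hk _; have [t [ht It]] := proj1 (hk (s - c)) e0.
exists (t * s); split; first exact: notPM.
have -> : t * s = t * (s - c) + t * c by ring.
apply: CD; last exact: CM.
apply: mono_in_JI; rewrite -mul_mpolyC mulrC; exact: IM.
Qed.


Definition Hcoef E' := (forall b, ext_ideal psi (coef_ideal JI E') b -> b = 0)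
      \/ ext_ideal psi (coef_ideal JI E') 1.

Lemma phi_coef0 (f : {mpoly A[n]}) m : phi (f@_m) != 0 -> f@_m != 0.
Proof. by apply: contraNneq => ->; rewrite rmorph0. Qed.

Lemma reduce E E' f : lt E E' -> I f -> phi (f@_E) != 0 ->
  (forall m, lt E' m -> f@_m = 0) -> (forall m, lt E m -> phi (f@_m) = 0) ->
  Hcoef E' ->
  exists f1, [/\ I f1, phi (f1@_E) != 0, (forall m, lt E m -> phi (f1@_m) = 0) &
    (forall m, (m == E') || lt E' m -> f1@_m = 0)].
Proof.
move=> lEE' If h2 h3 h4 hc.
set c := f@_E'.
have pc : phi c = 0 by apply: h4.
have nE : E' != E.
  by apply/eqP => e; move: (mo_irr Hlt E); rewrite -{2}e lEE'.
have nE' : E != E' by rewrite eq_sym.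
have [c0|c0] := eqVneq c 0.
  exists f; split => // m /orP [/eqP ->|]; [exact: c0|exact: h3].
have hg : greatest_mono lt f E' by apply/greatestP.
have JIc : JI (c *: 'X_[E']) by apply: init_in_JI.
case: hc => [H0|H1].
- have pc0 : psi c = 0.
    apply: H0; apply: ig_sub; exists c; split => //; exact: ig_sub.
  case: Hloc => _ hk _; have [t [ht It]] := proj1 (hk c) pc0.
  exists (t *: f - (t * c) *: 'X_[E']); split.
  + apply: (idealB HI); first exact: IZ.
    by rewrite -mul_mpolyC mulrC; apply: IM.
  + rewrite mcoeffB !mcoeffZ mcoeffX (negbTE nE) mulr0 subr0 rmorphM.
    by rewrite mulf_neq0 // phi_neq0.
  + move=> m lm; rewrite mcoeffB !mcoeffZ mcoeffX rmorphB !rmorphM h4 // pc.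
    by ring.
  + move=> m /orP [/eqP ->|lm].
      by rewrite mcoeffB !mcoeffZ mcoeffX eqxx mulr1 subrr.
    have nm : E' != m by apply/eqP => e; move: (mo_irr Hlt m); rewrite -{1}e lm.
    by rewrite mcoeffB !mcoeffZ mcoeffX (negbTE nm) h3 // !mulr0 subrr.
- have [d [hd JId]] := unit_coef H1.
  have [f2 [If2 [e2 z2]]] := JI_Good JId E'.
  rewrite mcoeffZ mcoeffX eqxx mulr1 in e2.
  exists (d *: f - c *: f2); split.
  + by apply: (idealB HI); apply: IZ.
  + rewrite mcoeffB !mcoeffZ rmorphB !rmorphM pc mul0r subr0.
    by rewrite mulf_neq0 // phi_neq0.
  + move=> m lm; rewrite mcoeffB !mcoeffZ rmorphB !rmorphM pc h4 //.
    by ring.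
  + move=> m /orP [/eqP ->|lm].
      by rewrite mcoeffB !mcoeffZ e2 -/c mulrC subrr.
    by rewrite mcoeffB !mcoeffZ h3 // z2 // !mulr0 subrr.
Qed.

Lemma descent E : (forall E', Hcoef E') -> forall E' f, I f -> phi (f@_E) != 0 ->
  (forall m, lt E' m -> f@_m = 0) -> (forall m, lt E m -> phi (f@_m) = 0) ->
  exists f', [/\ I f', phi (f'@_E) != 0 & forall m, lt E m -> f'@_m = 0].
Proof.
move=> Hc E'; elim/(well_founded_ind (mo_wf Hlt)): E' => E' IH f If h2 h3 h4.
have [eE|nE] := eqVneq E' E.
  by subst; exists f.
case/orP: (mo_total Hlt nE) => hE.
  exists f; split => // m lm; apply: h3; exact: mo_trans hE lm.
have [f1 [If1 p1 q1 z1]] := reduce hE If h2 h3 h4 (Hc E').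
have f1n0 : f1 != 0 by apply: (@nz_of_coef _ _ E); apply: phi_coef0.
have [M hM] := exists_greatest Hlt f1n0.
have [cM zM] := (greatestP Hlt f1 M).1 hM.
have lME' : lt M E'.
  have [eM|neM] := eqVneq M E'.
    by move: cM; rewrite eM z1 ?eqxx.
  case/orP: (mo_total Hlt neM) => // h.
  by move: cM; rewrite z1 ?h ?orbT ?eqxx.
exact: (IH M lME' f1 If1 p1 zM q1).
Qed.


Definition Q (g : {mpoly K[n]}) :=
  exists s f, [/\ ~ P s, I f & map_mpoly phi f = phi s *: g].

Lemma Q0 : Q 0.
Proof. by exists 1, 0; split; [exact: notP1|exact: I0|rewrite rmorph0 scaler0]. Qed.

Lemma QD x y : Q x -> Q y -> Q (x + y).
Proof.
move=> [s1 [f1 [h1 I1 e1]]] [s2 [f2 [h2 I2 e2]]].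
exists (s1 * s2), (s2 *: f1 + s1 *: f2); split.
- exact: notPM.
- by apply: ID; apply: IZ.
- rewrite rmorphD /= !map_mpolyZ e1 e2 !scalerA scalerDr rmorphM.
  by rewrite [phi s2 * _]mulrC.
Qed.

Lemma QX k m x : Q x -> Q ((k *: 'X_[m]) * x).
Proof.
move=> [s [f [hs If e]]].
case: Hres => _ /(_ k) [a [t [ht et]]].
exists (t * s), (a *: ('X_[m] * f)); split.
- exact: notPM.
- by apply: IZ; apply: IM.
- rewrite map_mpolyZ [map_mpoly phi (_ * _)]rmorphM /= map_mpolyX e -et.
  rewrite -!scalerAl -scalerAr !scalerA rmorphM; congr (_ *: _); ring.
Qed.

Lemma Q_ideal : is_ideal Q.
Proof.
split; [exact: Q0|exact: QD|].
move=> r x hx; rewrite (mpolyE r) mulr_suml.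
elim: (msupp r) => [|a l IH]; first by rewrite big_nil; exact: Q0.
by rewrite big_cons; apply: QD => //; apply: QX.
Qed.

Lemma J_Q g : ext_mpoly_ideal phi I g -> Q g.
Proof.
apply: ig_min; first exact: Q_ideal.
move=> y [x [Ix ->]]; exists 1, x; split => //; first exact: notP1.
by rewrite rmorph1 scale1r.
Qed.


Lemma greatest_map f M : greatest_mono lt f M -> phi (f@_M) != 0 ->
  greatest_mono lt (map_mpoly phi f) M.
Proof.
move=> hM pM; have [_ zM] := (greatestP Hlt f M).1 hM.
apply/(greatestP Hlt); rewrite mcoeff_map_mpoly; split => // m lm.
by rewrite mcoeff_map_mpoly (zM m lm) raddf0.
Qed.

Lemma dir1 h : JI h -> init_ideal lt (ext_mpoly_ideal phi I) (map_mpoly phi h).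
Proof.
have hT : is_ideal (init_ideal lt (ext_mpoly_ideal phi I)) := ig_ideal _.
move=> hh; apply: (@ig_min _ _
  (fun h => init_ideal lt (ext_mpoly_ideal phi I) (map_mpoly phi h)) _ _ _ hh).
  split.
  - by rewrite rmorph0; case: hT.
  - by move=> x y hx hy; rewrite rmorphD; case: hT => _ hD _; apply: hD.
  - by move=> r x hx; rewrite rmorphM; case: hT => _ _ hM; apply: hM.
move=> x [f [If [fn0 ->]]].
have [M hM] := exists_greatest Hlt fn0.
rewrite (init_termE Hlt hM) map_mpolyZ map_mpolyX.
have [p0|p0] := eqVneq (phi (f@_M)) 0.
  by rewrite p0 scale0r; case: hT.
apply: ig_sub; exists (map_mpoly phi f); split.
  by apply: ig_sub; exists f.
split.
  by apply: (@nz_of_coef _ _ M); rewrite mcoeff_map_mpoly.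
by rewrite (init_termE Hlt (greatest_map hM p0)) mcoeff_map_mpoly.
Qed.

Lemma dir2 (Hc : forall E, Hcoef E) g0 : ext_mpoly_ideal phi I g0 -> g0 != 0 ->
  ext_mpoly_ideal phi JI (init_term lt g0).
Proof.
move=> Jg g0n0.
have [E hE] := exists_greatest Hlt g0n0.
have [cE zE] := (greatestP Hlt g0 E).1 hE.
rewrite (init_termE Hlt hE).
have [s [f [hs If e]]] := J_Q Jg.
have ce : forall m, phi (f@_m) = phi s * g0@_m.
  by move=> m; rewrite -mcoeff_map_mpoly e mcoeffZ.
have pfE : phi (f@_E) != 0 by rewrite ce mulf_neq0 // phi_neq0.
have fn0 : f != 0 by apply: (@nz_of_coef _ _ E); apply: phi_coef0.
have [M hM] := exists_greatest Hlt fn0.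
have [_ zM] := (greatestP Hlt f M).1 hM.
have [f' [If' pf' zf']] := descent Hc If pfE zM
  (fun m lm => ltac:(by rewrite ce zE // mulr0)).
have hE' : greatest_mono lt f' E by apply/(greatestP Hlt); split => //; apply: phi_coef0.
have JIf := init_in_JI If' hE'.
have hx : ext_mpoly_ideal phi JI (phi (f'@_E) *: 'X_[E]).
  by apply: ig_sub; exists (f'@_E *: 'X_[E]); rewrite map_mpolyZ map_mpolyX.
have -> : g0@_E *: 'X_[E] =
  (g0@_E / phi (f'@_E))%:MP * (phi (f'@_E) *: 'X_[E]).
  by rewrite mul_mpolyC scalerA divfK.
have hT : is_ideal (ext_mpoly_ideal phi JI) := ig_ideal _.
by case: hT => _ _ hMul; apply: hMul.
Qed.

End Main.

Unset Implicit Arguments.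

Theorem proposition3p13
    (A : comNzRingType) (n : nat) (lt : rel 'X_{1..n})
    (I : {mpoly A[n]} -> Prop) (P : A -> Prop)
    (B : comPzRingType) (psi : {rmorphism A -> B})
    (K : fieldType) (phi : {rmorphism A -> K}) :
  noetherian A ->
  monomial_order lt ->
  is_ideal I ->
  is_prime_ideal P ->
  is_loc_quot P I psi ->
  is_residue_field P phi ->
  (forall E : 'X_{1..n},
      (forall b, ext_ideal psi (coef_ideal (init_ideal lt I) E) b -> b = 0)
      \/ ext_ideal psi (coef_ideal (init_ideal lt I) E) 1) ->
  forall g : {mpoly K[n]},
    ext_mpoly_ideal phi (init_ideal lt I) g <->
    init_ideal lt (ext_mpoly_ideal phi I) g.
Proof.
move=> _ Hlt HI HP Hloc Hres Hc g; split.
- apply: ig_min; first exact: ig_ideal.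
  move=> y [x [hx ->]]; exact: (dir1 phi Hlt hx).
- apply: ig_min; first exact: ig_ideal.
  move=> y [g0 [Jg [g0n0 ->]]]; exact: (dir2 Hlt HI HP Hloc Hres Hc Jg g0n0).
Qed.
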